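(* Let $\lambda=(\lambda_{m,s})_{m\in[M],s\in[S]}\in\Lambda$. Consider any scheduling policy (possibly using knowledge of arrival statistics, past and future arrivals, and past configurations) that at each slot $t$ chooses job service configurations $N^l(t)\in\mathcal N^l$ for all $l\in[L]$ and keeps the system stable, i.e. $\lim_{t\to\infty}\sum_{m,s}\mathbb E[Q_{m,s}(t)]<\infty$. Then its long-run average cost satisfies $$\liminf_{T\to\infty}\frac1T\sum_{t=1}^{T}\mathbb E\Big[\sum_{l\in[L]}\big(V\,C_1^l(N^l(t))+U\,C_2^l(N^l(t-1),N^l(t))\big)\Big]\ \ge\ C_{\mathrm{opt}}(\lambda),$$ where $C_{\mathrm{opt}}(\lambda)$ is the optimal value of $$\min_{(\lambda^l)_{l},\,P,\,\pi}\ \sum_{l\in[L]}\Big(V\,C^l_{\pi^l,1}+U\,C^l_{P^l,\pi^l,2}\Big)$$ subject to: $\lambda^l=(\lambda^l_{m,s})$ nonnegative with $\sum_l\lambda^l=\lambda$; for each $l$, $\pi^l$ is a probability distribution on $\mathcal N^l$ and $P^l$ is a stochastic matrix indexed by $\mathcal N^l\times\mathcal N^l$ with $\pi^lP^l=\pi^l$; and $\sum_s s\lambda^l_{m,s}\le\sum_{N\in\mathcal N^l}\pi^l_N\sum_s N_{m,s}$ for all $l,m$. Here $$C^l_{\pi^l,1}=\sum_{N\in\mathcal N^l}\pi^l_N\Big(c_0\mathbb 1_{\{N\neq0\}}+\sum_m c_m\sum_s N_{m,s}\Big),\qquad C^l_{P^l,\pi^l,2}=\sum_{N\in\mathcal N^l}\pi^l_N\sum_{N'\in\mathcal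 N^l}P^l_{N,N'}\sum_{m,\,s\ge2}\big[N_{m,s}-N'_{m,s-1}\big]^+.$$
   Context: Cloud system: $L$ servers, $M$ VM types, $K$ resource types. Server $l$ has $C_{l,k}$ units of resource $k$; a type-$m$ VM needs $R_{m,k}$ units of resource $k$. $\mathcal W^l=\{\eta\in\mathbb Z_{\ge0}^M:\sum_m\eta_mR_{m,k}\le C_{l,k}\ \forall k\}$ is the set of feasible VM configurations at server $l$. Time is slotted. A type-$(m,s)$ job requires a type-$m$ VM for $s$ slots, $s\in[S]$ ($S$ = maximum job size). A job service configuration at server $l$ is a matrix $N=(N_{m,s})_{m\in[M],s\in[S]}$ of nonnegative integers ($N_{m,s}$ = number of VMs given to type-$(m,s)$ jobs) with $(\sum_sN_{m,s})_m\in\mathcal W^l$; $\mathcal N^l$ is the set of these. $A_{m,s}(t)$ = number of type-$(m,s)$ arrivals in slot $t$; these are i.i.d. across slots, bounded by $A_{\max}$, with $\mathbb E[A_{m,s}(t)]=\lambda_{m,s}$ and $\Pr(A_{m,s}(t)=0)>0$. $Q_{m,s}(t)$ = number of type-$(m,s)$ jobs in the system; a type-$(m,s)$ job served in slot $t$ becomes a type-$(m,s-1)$ job at $t+1$ (and leaves if $s=1$). Capacity region: $\Lambda$ is the set of $\lambda$ such that for every $l$ there are $\beta^l_W\ge0$, $W\in\mathcal W^l$, $\sum_{W}\beta^l_W=1$, with $\sum_s s\lambda_{m,s}=\sum_l\sum_{W\in\mathcal W^l}\beta^l_WW_m$ for all $m$. Costs: given constants $c_0\ge0$ (static power) and $c_m\ge0$,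 the server running cost is $C_1^l(N)=c_0\mathbb 1_{\{N\ne0\}}+\sum_m c_m\sum_sN_{m,s}$; the (online) job migration cost is $C_2^l(N,N')=\sum_{m}\sum_{s\ge2}(N_{m,s}-N'_{m,s-1})^+$ for consecutive configurations $N$ (slot $t-1$) and $N'$ (slot $t$). $U,V\ge0$ are weighting parameters. *)

(* Defs.v *)
From HB Require Import structures.
From mathcomp Require Import all_boot all_order all_algebra.
From mathcomp Require Import all_classical all_reals all_analysis.
Set Implicit Arguments. Unset Strict Implicit. Unset Printing Implicit Defensive.
Import Order.TTheory GRing.Theory Num.Theory.
Local Open Scope classical_set_scope.
Local Open Scope ring_scope.

(* Index conventions: servers 'I_L, VM types 'I_M, resource types 'I_K,
   job sizes 'I_S where the ordinal j stands for the size j+1 (so s in [S]). *)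

Section Model.
Variables (L M K S : nat).
Variables (Cap : 'I_L -> 'I_K -> nat) (Req : 'I_M -> 'I_K -> nat).

Definition vmcfg := {ffun 'I_M -> nat}.
Definition cfg := {ffun 'I_M * 'I_S -> nat}.

Definition feasibleW (l : 'I_L) (eta : 'I_M -> nat) : bool :=
  [forall k : 'I_K, \sum_(m < M) eta m * Req m k <= Cap l k]%N.

Definition feasibleN (l : 'I_L) (N : cfg) : bool :=
  feasibleW l (fun m => \sum_(s < S) N (m, s))%N.

(* every entry of a feasible configuration is at most Cmax when each VM type
   requires a positive amount of some resource *)
Definition Cmax : nat := (\max_(l < L) \max_(k < K) Cap l k)%N.

Definition bounded_vmcfgs : seq vmcfg :=
  [seq [ffun m => nat_of_ord (f m)] | f : {ffun 'I_M -> 'I_(Cmax.+1)} <- enum {ffun 'I_M -> 'I_(Cmax.+1)}].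
Definition bounded_cfgs : seq cfg :=
  [seq [ffun i => nat_of_ord (f i)] | f : {ffun 'I_M * 'I_S -> 'I_(Cmax.+1)} <- enum {ffun 'I_M * 'I_S -> 'I_(Cmax.+1)}].

Definition Wset (l : 'I_L) : seq vmcfg := seq.filter (fun W : vmcfg => feasibleW l (fun m => W m)) bounded_vmcfgs.
Definition Nset (l : 'I_L) : seq cfg := [seq N <- bounded_cfgs | feasibleN l N].

(* index of size s-1 for an index of size s (used only when s >= 2) *)
Definition ordpred (j : 'I_S) : 'I_S :=
  Ordinal (leq_ltn_trans (leq_pred j) (ltn_ord j)).

Variable R : realType.
Variables (c0 : R) (c : 'I_M -> R).

Definition cost1 (N : cfg) : R :=
  c0 * (N != [ffun _ => 0%N])%:R + \sum_(m < M) c m * (\sum_(s < S) N (m, s))%:R.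

Definition cost2 (N N' : cfg) : R :=
  (\sum_(m < M) \sum_(j < S | (0 < j)%N) (N (m, j) - N' (m, ordpred j))%N)%:R.

Definition in_capacity_region (lam : 'I_M * 'I_S -> R) : Prop :=
  exists beta : 'I_L -> vmcfg -> R,
    (forall l W, W \in Wset l -> 0 <= beta l W) /\
    (forall l, \sum_(W <- Wset l) beta l W = 1) /\
    (forall m, \sum_(s < S) (s.+1)%:R * lam (m, s)
               = \sum_(l < L) \sum_(W <- Wset l) beta l W * (W m)%:R).

Definition opt_feasible (lam : 'I_M * 'I_S -> R)
    (laml : 'I_L -> 'I_M * 'I_S -> R) (pi : 'I_L -> cfg -> R)
    (P : 'I_L -> cfg -> cfg -> R) : Prop :=
  (forall l i, 0 <= laml l i) /\
  (forall i, \sum_(l < L) laml l i = lam i) /\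
  (forall l N, N \in Nset l -> 0 <= pi l N) /\
  (forall l, \sum_(N <- Nset l) pi l N = 1) /\
  (forall l N N', N \in Nset l -> N' \in Nset l -> 0 <= P l N N') /\
  (forall l N, N \in Nset l -> \sum_(N' <- Nset l) P l N N' = 1) /\
  (forall l N', N' \in Nset l -> \sum_(N <- Nset l) pi l N * P l N N' = pi l N') /\
  (forall l m, \sum_(s < S) (s.+1)%:R * laml l (m, s)
               <= \sum_(N <- Nset l) pi l N * (\sum_(s < S) N (m, s))%:R).

Variables (U V : R).

Definition opt_objective (pi : 'I_L -> cfg -> R) (P : 'I_L -> cfg -> cfg -> R) : R :=
  \sum_(l < L)
    (V * (\sum_(N <- Nset l) pi l N * cost1 N)
     + U * (\sum_(N <- Nset l) pi l N *
              \sum_(N' <- Nset l) P l N N' * cost2 N N')).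

Definition Copt (lam : 'I_M * 'I_S -> R) : R :=
  inf [set v | exists laml pi P, opt_feasible lam laml pi P /\ v = opt_objective pi P].

Definition served (Q : cfg) (Ns : 'I_L -> cfg) : cfg :=
  [ffun i => minn (Q i) (\sum_(l < L) Ns l i)]%N.

(* served type-(m,s+1) jobs become type-(m,s) jobs; served type-(m,1) jobs leave *)
Definition qstep (Q D Anew : cfg) : cfg :=
  [ffun i : 'I_M * 'I_S =>
     (Q i - D i + odflt 0 (omap (fun j' : 'I_S => D (i.1, j')) (insub (i.2).+1)) + Anew i)%N].

Fixpoint queue (A : nat -> cfg) (N : 'I_L -> nat -> cfg) (t : nat) : cfg :=
  match t with
  | 0 => [ffun _ => 0%N]
  | t'.+1 => qstep (queue A N t') (served (queue A N t') (fun l => N l t')) (A t')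
  end.

Definition slot_cost (N : 'I_L -> nat -> cfg) (t : nat) : R :=
  \sum_(l < L) (V * cost1 (N l t) + U * cost2 (N l t.-1) (N l t)).

End Model.

Section Prob.
Local Open Scope ereal_scope.
Context {d : measure_display} {Omega : measurableType d} {R : realType}.

(* every event {X \in B} is measurable (X takes countably many values) *)
Definition rv_meas (T : Type) (X : Omega -> T) : Prop :=
  forall B : set T, measurable (X @^-1` B).

Definition iid_seq (P : probability Omega R) (T : Type) (X : nat -> Omega -> T) : Prop :=
  (forall (ts : seq nat) (B : nat -> set T), uniq ts ->
     P (\big[setI/setT]_(t <- ts) (X t @^-1` B t))
     = \prod_(t <- ts) P (X t @^-1` B t)) /\
  (forall t (B : set T), P (X t @^-1` B) = P (X 0%N @^-1` B)).

Definition expect (P : probability Omega R) (f : Omega -> R) : \bar R :=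
  \int[P]_w (f w)%:E.
End Prob.

(* Main.v *)
Require Import Defs.
From HB Require Import structures.
From mathcomp Require Import all_boot all_order all_algebra.
From mathcomp Require Import all_classical all_reals all_analysis.
From mathcomp Require Import measurable_realfun.
From mathcomp Require Import zify ring lra.

Set Implicit Arguments. Unset Strict Implicit. Unset Printing Implicit Defensive.

Section Q.
Variables (L M S : nat).
Local Notation cfg := (cfg M S).

Definition Wk (m : 'I_M) (q : cfg) : nat := \sum_(s < S) s.+1 * q (m, s).
Definition capN (m : 'I_M) (x : cfg) : nat := \sum_(s < S) x (m, s).

Lemma shift_sum (f : 'I_S -> nat) :
  \sum_(s < S) s.+1 * odflt 0 (omap f (insub s.+1)) + \sum_(s < S) f s
  = \sum_(s < S) s.+1 * f s.
Proof.
pose h n := odflt 0 (omap f (insub n)).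
pose F n := n * h n.
have hf (s : 'I_S) : h s = f s by rewrite /h valK.
have e1 : \sum_(i < S.+1) F i = \sum_(i < S) F i.+1.
  by rewrite big_ord_recl /F mul0n add0n; apply: eq_bigr => i _; rewrite lift0.
have e2 : \sum_(i < S.+1) F i = \sum_(i < S) F i.
  rewrite big_ord_recr /= /F /h insubF ?ltnn //= muln0 addn0.
  by apply: eq_bigr.
have e3 : \sum_(i < S) F i = \sum_(s < S) s * f s.
  by apply: eq_bigr => i _; rewrite /F hf.
have -> : \sum_(s < S) s.+1 * odflt 0 (omap f (insub s.+1)) = \sum_(i < S) F i.+1 by [].
rewrite -e1 e2 e3 -big_split /=; apply: eq_bigr => s _; rewrite mulSn addnC //.
Qed.

Lemma qstep_W m (q D a : cfg) : (forall i, D i <= q i) ->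
  Wk m (qstep q D a) + \sum_(s < S) D (m, s) = Wk m q + Wk m a.
Proof.
move=> Dq; rewrite /Wk.
have E (s : 'I_S) : s.+1 * qstep q D a (m, s) = s.+1 * (q (m, s) - D (m, s))
   + s.+1 * odflt 0 (omap (fun j : 'I_S => D (m, j)) (insub s.+1)) + s.+1 * a (m, s).
  by rewrite ffunE !mulnDr.
have e3 : \sum_(s < S) s.+1 * qstep q D a (m, s) = \sum_(s < S) s.+1 * (q (m, s) - D (m, s))
   + \sum_(s < S) s.+1 * odflt 0 (omap (fun j : 'I_S => D (m, j)) (insub s.+1)) + \sum_(s < S) s.+1 * a (m, s).
  by rewrite -!big_split; apply: eq_bigr => s _; rewrite E.
rewrite e3.
have e1 := shift_sum (fun j => D (m, j)).
have e2 : \sum_(s < S) s.+1 * (q (m, s) - D (m, s)) + \sum_(s < S) s.+1 * D (m, s)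
          = \sum_(s < S) s.+1 * q (m, s).
  by rewrite -big_split; apply: eq_bigr => s _ /=; rewrite -mulnDr subnK.
lia.
Qed.

Lemma served_sum m (q : cfg) (Ns : 'I_L -> cfg) :
  \sum_(s < S) served q Ns (m, s) <= \sum_(l < L) capN m (Ns l).
Proof.
rewrite /capN exchange_big /=; apply: leq_sum => s _; rewrite ffunE; exact: geq_minr.
Qed.

Lemma served_le (q : cfg) (Ns : 'I_L -> cfg) i : served q Ns i <= q i.
Proof. by rewrite ffunE geq_minl. Qed.

Lemma sum_recr (F : nat -> nat) T : \sum_(t < T.+1) F t = \sum_(t < T) F t + F T.
Proof. by rewrite big_ord_recr. Qed.

Lemma work_bound (A' : nat -> cfg) (N' : 'I_L -> nat -> cfg) m T :
  \sum_(t < T) Wk m (A' t) <= Wk m (queue A' N' T) + \sum_(t < T) \sum_(l < L) capN m (N' l t).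
Proof.
elim: T => [|T IH]; first by rewrite !big_ord0.
rewrite (sum_recr (fun t => Wk m (A' t))) (sum_recr (fun t => \sum_(l < L) capN m (N' l t))) /=.
have e := qstep_W m (A' T) (served_le (queue A' N' T) (fun l => N' l T)).
have le := served_sum m (queue A' N' T) (fun l => N' l T).
move: IH e le; move: (\sum_(t < T) Wk m (A' t)) => a1; move: (\sum_(t < T) \sum_(l < L) capN m (N' l t)) => a2; move: (\sum_(l < L) capN m (N' l T)) => a3; move: (\sum_(s < S) served (queue A' N' T) (N'^~ T) (m, s)) => a4. lia.
Qed.

Lemma Wk_le m (q : cfg) : Wk m q <= S * \sum_i q i.
Proof.
apply: (leq_trans (n := S * \sum_(s < S) q (m, s))).
  rewrite /Wk big_distrr /=; apply: leq_sum => s _; apply: leq_mul => //.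
rewrite leq_mul2l; apply/orP; right.
have -> : \sum_i q i = \sum_(m' < M) \sum_(s < S) q (m', s).
  by rewrite pair_big; apply: eq_big => // -[a b].
by rewrite (bigD1 m) //= leq_addr.
Qed.
End Q.

Import Order.TTheory GRing.Theory Num.Theory.
Local Open Scope classical_set_scope.
Local Open Scope ring_scope.

Lemma sum_indic_seq (R : numDomainType) (T : eqType) (s : seq T) (x : T) :
  x \in s -> uniq s -> \sum_(y <- s) ((x == y)%:R : R) = 1.
Proof.
move=> xs us; rewrite (bigD1_seq x) //= eqxx big1 ?addr0 // => y.
by rewrite eq_sym => /negPf ->.
Qed.

Lemma term_le_sum (R : numDomainType) (T : eqType) (s : seq T) (F : T -> R) (x : T) :
  x \in s -> uniq s -> (forall y, y \in s -> 0 <= F y) -> F x <= \sum_(y <- s) F y.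
Proof.
move=> xs us F0; rewrite (bigD1_seq x) //= lerDl.
rewrite big_seq_cond; apply: sumr_ge0 => y /andP [ys _]; exact: F0.
Qed.

Section Alg.
Variables (L M K S : nat) (Cap : 'I_L -> 'I_K -> nat) (Req : 'I_M -> 'I_K -> nat).
Variables (R : realType) (c0 : R) (c : 'I_M -> R) (U V : R).
Variable lam : 'I_M * 'I_S -> R.

Local Notation Ns l := (Nset S Cap Req l).
Local Notation cfg := (cfg M S).

Definition capx (m : 'I_M) (x : cfg) : R := (\sum_(s < S) x (m, s))%:R.
Definition wk (m : 'I_M) : R := \sum_(s < S) (s.+1)%:R * lam (m, s).

Definition objmu (mu : 'I_L * cfg * cfg -> R) : R :=
  \sum_(l < L) (V * (\sum_(x <- Ns l) \sum_(y <- Ns l) mu (l, x, y) * cost1 c0 c y)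
              + U * (\sum_(x <- Ns l) \sum_(y <- Ns l) mu (l, x, y) * cost2 R x y)).
Definition capmu (mu : 'I_L * cfg * cfg -> R) (m : 'I_M) : R :=
  \sum_(l < L) \sum_(x <- Ns l) \sum_(y <- Ns l) mu (l, x, y) * capx m x.
Definition rowmu (mu : 'I_L * cfg * cfg -> R) l x : R := \sum_(y <- Ns l) mu (l, x, y).
Definition colmu (mu : 'I_L * cfg * cfg -> R) l x : R := \sum_(y <- Ns l) mu (l, y, x).

Variable mu : 'I_L * cfg * cfg -> R.
Hypothesis Nsu : forall l, uniq (Ns l).
Hypothesis lam0 : forall i, 0 <= lam i.
Hypothesis mu0 : forall i, 0 <= mu i.
Hypothesis mu1 : forall l, \sum_(x <- Ns l) \sum_(y <- Ns l) mu (l, x, y) = 1.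
Hypothesis murc : forall l x, x \in Ns l -> rowmu mu l x = colmu mu l x.
Hypothesis mucap : forall m, wk m <= capmu mu m.

Definition pimu l x := colmu mu l x.
Definition Pmu l x y := if pimu l x != 0 then mu (l, x, y) / pimu l x else (x == y)%:R.
Definition rl l m := \sum_(x <- Ns l) pimu l x * capx m x.
Definition tot m := \sum_(l < L) rl l m.
Definition lamlmu l (i : 'I_M * 'I_S) : R :=
  if tot i.1 != 0 then lam i * (rl l i.1 / tot i.1) else 0.

Lemma pimu0 l x : 0 <= pimu l x.
Proof. by apply: sumr_ge0 => y _. Qed.

Lemma capx0 m x : 0 <= capx m x.
Proof. by rewrite /capx ler0n. Qed.

Lemma rl0 l m : 0 <= rl l m.
Proof. by apply: sumr_ge0 => x _; rewrite mulr_ge0 ?pimu0 ?capx0. Qed.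

Lemma tot0 m : 0 <= tot m.
Proof. by apply: sumr_ge0 => l _; exact: rl0. Qed.

Lemma capmuE m : capmu mu m = tot m.
Proof.
rewrite /capmu /tot; apply: eq_bigr => l _; rewrite /rl.
rewrite big_seq_cond [RHS]big_seq_cond; apply: eq_bigr => x /andP [xs _].
by rewrite -mulr_suml -/(rowmu mu l x) murc.
Qed.

Lemma mu_le_pi l x y : x \in Ns l -> y \in Ns l -> mu (l, x, y) <= pimu l x.
Proof.
move=> xs ys; rewrite /pimu -murc //; apply: (term_le_sum (F := fun y => mu (l, x, y))) => //.
Qed.

Lemma piP l x y : x \in Ns l -> y \in Ns l -> pimu l x * Pmu l x y = mu (l, x, y).
Proof.
move=> xs ys; rewrite /Pmu; case: ifP => [nz|/negbFE/eqP z].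
  by rewrite mulrC divfK.
rewrite z mul0r; apply/eqP; rewrite eq_sym eq_le (mu0 (l, x, y)) andbT -z; exact: mu_le_pi.
Qed.

Lemma feasible_mu : opt_feasible Cap Req lam lamlmu pimu Pmu.
Proof.
split; [|split; [|split; [|split; [|split; [|split; [|split]]]]]].
- move=> l i; rewrite /lamlmu; case: ifP => // nz.
  by rewrite mulr_ge0 ?lam0 // divr_ge0 ?rl0 ?tot0.
- move=> [m s] /=; rewrite /lamlmu /=; have [z|nz] := eqVneq (tot m) 0.

    rewrite big1 // ; apply/esym.
    have h : wk m = 0.
      apply/eqP; rewrite eq_le; apply/andP; split.
        by rewrite -z -capmuE mucap.
      by apply: sumr_ge0 => j _; rewrite mulr_ge0 ?lam0.
    have H0 : forall j : 'I_S, true -> 0 <= (j.+1)%:R * lam (m, j).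
      by move=> j _; rewrite mulr_ge0 ?lam0.
    have := psumr_eq0P H0 h.
    by move=> /(_ s isT) /eqP; rewrite mulf_eq0 pnatr_eq0 /= => /eqP.

  by rewrite -mulr_sumr -mulr_suml -/(tot m) divff ?mulr1.
- by move=> l x _; exact: pimu0.
- move=> l; rewrite /pimu /colmu; rewrite exchange_big; exact: mu1.
- move=> l x y xs ys; rewrite /Pmu; case: ifP => nz.
    by rewrite divr_ge0 ?mu0 ?pimu0.
  by rewrite ler0n.
- move=> l x xs; rewrite /Pmu; have [z|nz] := eqVneq (pimu l x) 0 => /=.
    exact: sum_indic_seq.
  by rewrite -mulr_suml -/(rowmu mu l x) murc // -/(pimu l x) divff.
- move=> l y ys; rewrite big_seq_cond.
  under eq_bigr => x /andP [xs _] do rewrite piP //.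
  by rewrite -big_seq_cond.
- move=> l m; rewrite /lamlmu /=.
  have -> : \sum_(N <- Ns l) pimu l N * (\sum_(s < S) N (m, s))%:R = rl l m by [].
  have [z|nz] := eqVneq (tot m) 0 => /=; last first.
    under eq_bigr do rewrite mulrA.
    rewrite -mulr_suml -/(wk m).
    apply: (le_trans (y := tot m * (rl l m / tot m))).
      by rewrite ler_wpM2r ?divr_ge0 ?rl0 ?tot0 // -capmuE mucap.
    by rewrite mulrCA divff ?mulr1.
  by rewrite big1 ?rl0 // => s _; rewrite mulr0.
Qed.

Lemma obj_mu : opt_objective Cap Req c0 c U V pimu Pmu = objmu mu.
Proof.
rewrite /opt_objective /objmu; apply: eq_bigr => l _; congr (V * _ + U * _).
  rewrite /pimu /colmu.
  under eq_bigr do rewrite mulr_suml.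
  by rewrite exchange_big.
rewrite big_seq_cond [RHS]big_seq_cond; apply: eq_bigr => x /andP [xs _].
rewrite mulr_sumr big_seq_cond [RHS]big_seq_cond; apply: eq_bigr => y /andP [ys _].
by rewrite mulrA piP.
Qed.
End Alg.

Lemma cost1_ge0 (M S : nat) (R : realType) (c0 : R) (c : 'I_M -> R) (N : cfg M S) :
  0 <= c0 -> (forall m, 0 <= c m) -> 0 <= cost1 c0 c N.
Proof.
move=> h0 hc; rewrite /cost1 addr_ge0 ?mulr_ge0 ?ler0n //.
by apply: sumr_ge0 => m _; rewrite mulr_ge0 ?ler0n.
Qed.

Lemma cost2_ge0 (M S : nat) (R : realType) (N N' : cfg M S) : 0 <= cost2 R N N'.
Proof. by rewrite /cost2 ler0n. Qed.

Lemma objective_ge0 (L M K S : nat) (Cap : 'I_L -> 'I_K -> nat) (Req : 'I_M -> 'I_K -> nat)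
  (R : realType) (c0 : R) (c : 'I_M -> R) (U V : R) (lam : 'I_M * 'I_S -> R) laml pi P :
  0 <= c0 -> (forall m, 0 <= c m) -> 0 <= U -> 0 <= V ->
  opt_feasible Cap Req lam laml pi P -> 0 <= opt_objective Cap Req c0 c U V pi P.
Proof.
move=> h0 hc hU hV [_ [_ [hpi [_ [hP _]]]]].
apply: sumr_ge0 => l _; apply: addr_ge0; apply: mulr_ge0 => //.
  rewrite big_seq_cond; apply: sumr_ge0 => x /andP [xs _].
  by rewrite mulr_ge0 ?hpi ?cost1_ge0.
rewrite big_seq_cond; apply: sumr_ge0 => x /andP [xs _].
rewrite mulr_ge0 ?hpi //.
rewrite big_seq_cond; apply: sumr_ge0 => y /andP [ys _].
by rewrite mulr_ge0 ?hP ?cost2_ge0.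
Qed.

Section Prob.
Context d (Omega : measurableType d) (R : realType) (P : probability Omega R).

Definition RE (f : Omega -> R) : R := fine (expect P f).
Definition bm (f : Omega -> R) := measurable_fun setT f /\ exists k : R, forall w, `|f w| <= k.

Lemma bm_int f : bm f -> P.-integrable setT (EFin \o f).
Proof.
move=> [mf [k hk]]; apply: measurable_bounded_integrable => //.
  exact: (le_lt_trans (probability_le1 P measurableT) (ltry _)).
exists k; split; first exact: num_real.
by move=> M kM x _; apply: le_trans (hk x) (ltW kM).
Qed.

Lemma RE_finnum f : bm f -> expect P f \is a fin_num.
Proof. by move=> bf; exact: (integrable_fin_num measurableT (bm_int bf)). Qed.

Lemma expectE f : bm f -> expect P f = (RE f)%:E.
Proof. by move=> bf; rewrite /RE fineK //; exact: RE_finnum. Qed.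

Lemma bm_add f g : bm f -> bm g -> bm (fun w => f w + g w).
Proof.
move=> [mf [k hk]] [mg [k' hk']]; split; first exact: measurable_funD.
exists (k + k') => w; apply: le_trans (ler_normD _ _) _; exact: lerD.
Qed.

Lemma bm_scale a f : bm f -> bm (fun w => a * f w).
Proof.
move=> [mf [k hk]]; split; first exact: measurable_funM.
exists (`|a| * k) => w; rewrite normrM ler_wpM2l //.
Qed.

Lemma bm_cst a : bm (fun _ => a).
Proof. by split; [exact: measurable_cst| exists `|a|]. Qed.

Lemma bm_sum (I : Type) (s : seq I) (F : I -> Omega -> R) :
  (forall i, bm (F i)) -> bm (fun w => \sum_(i <- s) F i w).
Proof.
move=> bF; elim: s => [|i s IH].
  by under eq_fun do rewrite big_nil; exact: bm_cst.
under eq_fun do rewrite big_cons; exact: bm_add.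
Qed.

Lemma bm_indic (E : set Omega) : measurable E -> bm (\1_E).
Proof.
move=> mE; split; first exact: measurable_indic.
by exists 1 => w; rewrite indicE; case: (w \in E); rewrite ?normr1 ?normr0.
Qed.

Lemma RE_add f g : bm f -> bm g -> RE (fun w => f w + g w) = RE f + RE g.
Proof.
move=> bf bg; rewrite /RE /expect.
under eq_integral do rewrite EFinD.
rewrite (integralD measurableT (bm_int bf) (bm_int bg)).
by rewrite fineD //; exact: RE_finnum.
Qed.

Lemma RE_scale a f : bm f -> RE (fun w => a * f w) = a * RE f.
Proof.
move=> bf; rewrite /RE /expect.
under eq_integral do rewrite EFinM.
rewrite (integralZl measurableT (bm_int bf)).
by rewrite fineM //; exact: RE_finnum.
Qed.

Lemma RE_sum (I : Type) (s : seq I) (F : I -> Omega -> R) :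
  (forall i, bm (F i)) -> RE (fun w => \sum_(i <- s) F i w) = \sum_(i <- s) RE (F i).
Proof.
move=> bF; elim: s => [|i s IH].
  under eq_fun do rewrite big_nil; rewrite big_nil /RE /expect.
  by rewrite integral0.
under eq_fun do rewrite big_cons; rewrite big_cons RE_add ?IH //.
exact: bm_sum.
Qed.

Lemma RE_cst a : RE (fun _ => a) = a.
Proof.
rewrite /RE /expect integral_cst //= probability_setT mule1 //.
Qed.

Lemma RE_le f g : bm f -> bm g -> (forall w, f w <= g w) -> RE f <= RE g.
Proof.
move=> bf bg fg; rewrite /RE; apply: fine_le.
- exact: RE_finnum.
- exact: RE_finnum.
apply: (le_integral measurableT (bm_int bf) (bm_int bg)).
by move=> w _; rewrite lee_fin.
Qed.

Lemma RE_indic (E : set Omega) : measurable E -> RE (\1_E) = fine (P E).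
Proof.
move=> mE; rewrite /RE /expect integral_indic // setIT //.
Qed.

Lemma prob_01 (E : set Omega) : measurable E -> 0 <= fine (P E) <= 1.
Proof.
move=> mE; apply/andP; split; first by apply: fine_ge0.
rewrite -lee_fin fineK ?probability_le1 //.
by rewrite ge0_fin_numE ?(le_lt_trans (probability_le1 P mE)) ?ltry.
Qed.


Lemma rv_comp (T1 T2 : Type) (X : Omega -> T1) (f : T1 -> T2) :
  rv_meas X -> rv_meas (fun w => f (X w)).
Proof. by move=> hX B; exact: (hX (f @^-1` B)). Qed.

Lemma rv_cst (T : Type) (x : T) : rv_meas (fun _ : Omega => x).
Proof.
move=> B; have [Bx|nBx] := pselect (B x).
  by rewrite (_ : _ @^-1` _ = setT) //; apply/seteqP; split.
by rewrite (_ : _ @^-1` _ = set0) //; apply/seteqP; split.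
Qed.

Lemma pm_rv (T : countType) (X : Omega -> T) :
  (forall x, measurable (X @^-1` [set x])) -> rv_meas X.
Proof.
move=> hX B.
pose F n := match @unpickle T n with
            | Some x => if `[< B x >] then X @^-1` [set x] else set0
            | None => set0 end.
have -> : X @^-1` B = \bigcup_n F n.
  apply/seteqP; split => [w Bw|w [n _]].
    exists (pickle (X w)) => //; rewrite /F pickleK.
    by case: asboolP.
  rewrite /F; case: (unpickle n) => [x|] //.
  by case: asboolP => // Bx /= ->.
apply: bigcupT_measurable => n; rewrite /F; case: (unpickle n) => [x|] //.
by case: asboolP.
Qed.

Lemma rv_pair (T1 T2 : countType) (X : Omega -> T1) (Y : Omega -> T2) :
  rv_meas X -> rv_meas Y -> rv_meas (fun w => (X w, Y w)).
Proof.
move=> hX hY; apply: pm_rv => -[x y].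
rewrite (_ : _ @^-1` _ = X @^-1` [set x] `&` Y @^-1` [set y]).
  exact: measurableI.
by apply/seteqP; split => w /=; [case => -> ->|case => -> ->].
Qed.

Lemma rv_ffun (I : finType) (T : countType) (X : I -> Omega -> T) :
  (forall i, rv_meas (X i)) -> rv_meas (fun w => [ffun i => X i w]).
Proof.
move=> hX; apply: pm_rv => g.
rewrite (_ : _ @^-1` _ = \big[setI/setT]_(i <- enum I) (X i @^-1` [set g i])).
  by apply: bigsetI_measurable => i _; exact: hX.
apply/seteqP; split => w /=.
  move=> <-; rewrite -bigcap_seq => i _ /=; by rewrite ffunE.
rewrite -bigcap_seq => h; apply/ffunP => i; rewrite ffunE; apply: h.
by rewrite /= mem_enum.
Qed.

Lemma rv_mfun (X : Omega -> R) : rv_meas X -> measurable_fun setT X.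
Proof. by move=> hX _ B _; rewrite setTI; exact: hX. Qed.

Lemma bm_rv (T : Type) (X : Omega -> T) (g : T -> R) (k : R) :
  rv_meas X -> (forall w, `|g (X w)| <= k) -> bm (fun w => g (X w)).
Proof. by move=> hX hk; split; [apply: rv_mfun; exact: rv_comp| exists k]. Qed.

Lemma ev_meas (T1 T2 : Type) (X : Omega -> T1) (Y : Omega -> T2) x y :
  rv_meas X -> rv_meas Y -> measurable [set w | X w = x /\ Y w = y].
Proof.
move=> hX hY.
rewrite (_ : [set w | _] = X @^-1` [set x] `&` Y @^-1` [set y]) //.
exact: measurableI.
Qed.

Definition pr2 (T1 T2 : Type) (X : Omega -> T1) (Y : Omega -> T2) x y :=
  fine (P [set w | X w = x /\ Y w = y]).

Lemma pr2_01 (T1 T2 : Type) (X : Omega -> T1) (Y : Omega -> T2) x y :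
  rv_meas X -> rv_meas Y -> 0 <= pr2 X Y x y <= 1.
Proof. by move=> hX hY; apply: prob_01; exact: ev_meas. Qed.

Lemma decomp2 (T : eqType) (s : seq T) (g : T -> T -> R) (a b : T) :
  uniq s -> a \in s -> b \in s ->
  g a b = \sum_(x <- s) \sum_(y <- s) g x y * ((a == x) && (b == y))%:R.
Proof.
move=> us As Bs; rewrite (bigD1_seq a) //= [X in _ + X]big1 ?addr0; last first.
  by move=> x xa; apply: big1 => y _; rewrite eq_sym (negPf xa) /= mulr0.
rewrite (bigD1_seq b) //= !eqxx mulr1 [X in _ + X]big1 ?addr0 // => y yb.
by rewrite eq_sym (negPf yb) /= mulr0.
Qed.

Lemma RE_pair (T : eqType) (s : seq T) (X Y : Omega -> T) (g : T -> T -> R) :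
  uniq s -> rv_meas X -> rv_meas Y -> (forall w, X w \in s) -> (forall w, Y w \in s) ->
  RE (fun w => g (X w) (Y w)) = \sum_(x <- s) \sum_(y <- s) g x y * pr2 X Y x y.
Proof.
move=> us hX hY Xs Ys.
have -> : (fun w => g (X w) (Y w)) =
   (fun w => \sum_(x <- s) \sum_(y <- s) g x y * \1_[set w | X w = x /\ Y w = y] w).
  apply: funext => w; rewrite (decomp2 g us (Xs w) (Ys w)).
  apply: eq_bigr => x _; apply: eq_bigr => y _; congr (_ * _).
  rewrite indicE; congr (_%:R); congr (nat_of_bool _); apply/idP/idP.
    by move=> /andP [/eqP h1 /eqP h2]; apply: mem_set; split.
  by move/set_mem => [-> ->]; rewrite !eqxx.
rewrite RE_sum; last first.
  by move=> x; apply: bm_sum => y; apply: bm_scale; apply: bm_indic; exact: ev_meas.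
apply: eq_bigr => x _; rewrite RE_sum; last first.
  by move=> y; apply: bm_scale; apply: bm_indic; exact: ev_meas.
apply: eq_bigr => y _; rewrite RE_scale; last by apply: bm_indic; exact: ev_meas.
by rewrite RE_indic //; exact: ev_meas.
Qed.

End Prob.

Module Topo.
Import numFieldNormedType.Exports.

Definition RT2 (R : realType) : ptopologicalType := HB.pack_for ptopologicalType R.

Lemma nested_limit (I : eqType) (R : realType) (H : nat -> set (prod_topology (fun _ : I => RT2 R))) :
  (forall n, closed (H n)) -> (forall n f, H n f -> forall i, 0 <= f i <= 1) ->
  (forall n, H n.+1 `<=` H n) -> (forall n, H n !=set0) -> exists f, forall n, H n f.
Proof.
move=> Hc Hb Hd Hne.
have cK : compact [set f : prod_topology (fun _ : I => (RT2 R)) | forall i, (`[0, 1]%classic : set R) (f i)].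
  have := (@tychonoff I (fun _ => RT2 R) (fun _ => `[0, 1]%classic) (fun _ => @segment_compact R 0 1)).
  by [].
have Hmono : forall i j, (i <= j)%N -> H j `<=` H i.
  move=> i j /subnK <-; elim: (j - i)%N => [|k IH] //=.
  by rewrite addSn; apply: subset_trans (Hd _) IH.
have FF : ProperFilter (filter_from setT H).
  apply: filter_from_proper; last by move=> i _; exact: Hne.
  apply: filter_fromT_filter; first by exists 0%N.
  move=> i j; exists (maxn i j) => x Hx; split.
    exact: (Hmono _ _ (leq_maxl i j)).
  exact: (Hmono _ _ (leq_maxr i j)).
have FK : filter_from setT H [set f : prod_topology (fun _ : I => (RT2 R)) | forall i, (`[0, 1]%classic : set R) (f i)].
  exists 0%N => // f /Hb Hf i; rewrite /= in_itv /=; exact: Hf.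
have [p [_ cp]] := cK _ FF FK.
exists p => n.
have := Hc n; rewrite /closed => /(_ p); apply => B nB.
by apply: cp => //; exists n.
Qed.

Lemma cont_sum (T : topologicalType) (R : realType) (J : Type) (s : seq J) (F : J -> T -> R) :
  (forall j, continuous (F j)) -> continuous (fun x => \sum_(j <- s) F j x).
Proof.
move=> Fc; elim: s => [|j s IH].
  by under eq_fun do rewrite big_nil; exact: cst_continuous.
under eq_fun do rewrite big_cons.
by move=> x; apply: continuousD; [exact: Fc| exact: IH].
Qed.

Lemma cont_scale (T : topologicalType) (R : realType) (a : R) (F : T -> R) :
  continuous F -> continuous (fun x => a * F x).
Proof. by move=> Fc x; apply: continuousM; [exact: cst_continuous| exact: Fc]. Qed.

Lemma cont_scaler (T : topologicalType) (R : realType) (a : R) (F : T -> R) :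
  continuous F -> continuous (fun x => F x * a).
Proof. by move=> Fc; under eq_fun do rewrite mulrC; exact: cont_scale. Qed.

Lemma cont_add (T : topologicalType) (R : realType) (F G : T -> R) :
  continuous F -> continuous G -> continuous (fun x => F x + G x).
Proof. by move=> Fc Gc x; apply: continuousD; [exact: Fc|exact: Gc]. Qed.

Lemma cont_sub (T : topologicalType) (R : realType) (F G : T -> R) :
  continuous F -> continuous G -> continuous (fun x => F x - G x).
Proof. by move=> Fc Gc x; apply: continuousB; [exact: Fc|exact: Gc]. Qed.

Lemma cont_opp (T : topologicalType) (R : realType) (F : T -> R) :
  continuous F -> continuous (fun x => - F x).
Proof. by move=> Fc x; apply: continuousN; exact: Fc. Qed.

Lemma cont_cst (T : topologicalType) (R : realType) (a : R) :
  continuous (fun _ : T => a).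
Proof. exact: cst_continuous. Qed.

Lemma cont_proj (I : eqType) (R : realType) (i : I) :
  continuous (fun f : prod_topology (fun _ : I => RT2 R) => (f i : R)).
Proof. exact: (@proj_continuous I (fun _ => RT2 R) i). Qed.

Lemma closed_forall_le (T : topologicalType) (R : realType) (J : Type) (g : J -> T -> R) (b : J -> R) :
  (forall j, continuous (g j)) -> closed [set x | forall j, g j x <= b j].
Proof.
move=> gc.
have -> : [set x | forall j, g j x <= b j] = \bigcap_(j in setT) [set x | g j x <= b j].
  by apply/seteqP; split => x /= h j; [move=> _; exact: h| exact: h].
apply: closed_bigI => j _.
apply: (@preimage_closed _ _ (g j) [set y | y <= b j]); [by move=> *; exact: gc| exact: closed_le].
Qed.

End Topo.

Lemma frequent (R : realType) (u : nat -> \bar R) (r : R) :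
  (limn_einf u < r%:E)%E -> forall n, exists T, (n <= T)%N /\ (u T < r%:E)%E.
Proof.
move=> h n; move: h; rewrite limn_einf_lim.
rewrite (cvg_lim _ (@cvg_einfs_sup R u)) // => h.
have h2 : (einfs u n < r%:E)%E.
  apply: le_lt_trans h; apply: ereal_sup_ubound; by exists n.
have [y [k /= nk <-] hy] := ereal_inf_lt h2.
by exists k.
Qed.

Lemma small_le (R : realType) (x D : R) : 0 <= D -> (forall n, x <= D * (n.+1%:R)^-1) -> x <= 0.
Proof.
move=> D0 h; rewrite leNgt; apply/negP => x0.
have D1 : 0 < D + 1 by lra.
have [k hk] := ltr_add_invr (divr_gt0 x0 D1).
rewrite add0r ltr_pdivlMr // in hk.
have := h k; have : 0 <= (k.+1%:R : R)^-1 by rewrite invr_ge0 ler0n.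
move: hk; move: ((k.+1%:R : R)^-1) => a; nra.
Qed.

Section Main.
Variables (L M K S : nat) (Cap : 'I_L -> 'I_K -> nat) (Req : 'I_M -> 'I_K -> nat)
  (R : realType) (c0 : R) (c : 'I_M -> R) (U V : R)
  (d : measure_display) (Omega : measurableType d) (P : probability Omega R)
  (Amax : nat) (lam : 'I_M * 'I_S -> R)
  (A : nat -> Omega -> cfg M S)
  (N : 'I_L -> nat -> Omega -> cfg M S).
Hypothesis hReq : forall m, exists k, (0 < Req m k)%N.
Hypothesis hAm : forall t, rv_meas (A t).
Hypothesis hAb : forall t w i, (A t w i <= Amax)%N.
Hypothesis hAE : forall t i, expect P (fun w => (A t w i)%:R) = (lam i)%:E.
Hypothesis hNm : forall l t, rv_meas (N l t).
Hypothesis hNf : forall l t w, feasibleN Cap Req l (N l t w).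

Local Notation Ns l := (Nset S Cap Req l).
Local Notation cfg := (cfg M S).

Lemma Nsu l : uniq (Ns l).
Proof.
apply: filter_uniq; rewrite /bounded_cfgs map_inj_uniq ?enum_uniq //.
move=> f g /ffunP fg; apply/ffunP => i; apply: val_inj.
by have := fg i; rewrite !ffunE.
Qed.

Lemma feas_bound l (x : cfg) i : feasibleN Cap Req l x -> (x i <= Cmax Cap)%N.
Proof.
case: i => m s /forallP hf; have [k hk] := hReq m.
have := hf k; set F := fun m' => (\sum_(s0 < S) x (m', s0))%N => hk2.
apply: (leq_trans _ (leq_trans hk2 _)).
  apply: (leq_trans (n := (F m * Req m k)%N)).
    apply: (leq_trans (n := F m)); last by rewrite leq_pmulr.
    by rewrite /F (bigD1 s) //= leq_addr.
  by rewrite (bigD1 m) //= leq_addr.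
apply: (leq_trans (n := (\max_(k0 < K) Cap l k0)%N)).
  exact: (@leq_bigmax _ (fun k0 => Cap l k0) k).
exact: (@leq_bigmax _ (fun l0 => (\max_(k0 < K) Cap l0 k0)%N) l).
Qed.

Lemma NinNs l t w : N l t w \in Ns l.
Proof.
rewrite mem_filter hNf /=.
apply/mapP; exists [ffun i => inord (N l t w i) : 'I_(Cmax Cap).+1]; first by rewrite mem_enum.
apply/ffunP => i; rewrite !ffunE inordK // ltnS; exact: feas_bound.
Qed.

Lemma lam0 i : 0 <= lam i.
Proof.
rewrite -lee_fin -(hAE 0 i); apply: integral_ge0 => w _; rewrite lee_fin ler0n //.
Qed.

Definition pr l t x y := pr2 P (N l t.-1) (N l t) x y.
Definition muT (T : nat) (i : 'I_L * cfg * cfg) : R :=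
  T%:R^-1 * \sum_(1 <= t < T.+1) pr i.1.1 t i.1.2 i.2.

Lemma REpair l t (g : cfg -> cfg -> R) :
  RE P (fun w => g (N l t.-1 w) (N l t w)) =
  \sum_(x <- Ns l) \sum_(y <- Ns l) g x y * pr l t x y.
Proof. exact: (RE_pair P g (Nsu l) (hNm _ _) (hNm _ _) (NinNs l _) (NinNs l _)). Qed.

Lemma pr01 l t x y : 0 <= pr l t x y <= 1.
Proof. exact: pr2_01. Qed.

Lemma pr_sum1 l t : \sum_(x <- Ns l) \sum_(y <- Ns l) pr l t x y = 1.
Proof.
have := REpair l t (fun _ _ => 1); rewrite RE_cst => ->.
by apply: eq_bigr => x _; apply: eq_bigr => y _; rewrite mul1r.
Qed.

Lemma bm_pairN l t (g : cfg -> cfg -> R) :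
  bm (fun w => g (N l t.-1 w) (N l t w)).
Proof.
apply: (bm_rv (X := fun w => (N l t.-1 w, N l t w)) (g := fun p => g p.1 p.2)
          (k := \sum_(x <- Ns l) \sum_(y <- Ns l) `|g x y|)).
  by apply: rv_pair; exact: hNm.
move=> w /=.
apply: (le_trans (y := \sum_(y <- Ns l) `|g (N l t.-1 w) y|)).
  apply: (term_le_sum (F := fun y => `|g (N l t.-1 w) y|)) => //; first exact: NinNs.
  exact: Nsu.
apply: (term_le_sum (F := fun x => \sum_(y <- Ns l) `|g x y|)); first exact: NinNs.
  exact: Nsu.
by move=> x _; apply: sumr_ge0.
Qed.

Lemma RE_slot t :
  RE P (fun w => slot_cost c0 c U V (fun l u => N l u w) t) =
  \sum_(l < L) \sum_(x <- Ns l) \sum_(y <- Ns l) (V * cost1 c0 c y + U * cost2 R x y) * pr l t x y.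
Proof.
rewrite /slot_cost RE_sum; last first.
  by move=> l; exact: (bm_pairN l t (fun x y => V * cost1 c0 c y + U * cost2 R x y)).
apply: eq_bigr => l _.
exact: (REpair l t (fun x y => V * cost1 c0 c y + U * cost2 R x y)).
Qed.

Lemma bm_slot t : bm (fun w => slot_cost c0 c U V (fun l u => N l u w) t).
Proof.
rewrite /slot_cost; apply: bm_sum => l.
exact: (bm_pairN l t (fun x y => V * cost1 c0 c y + U * cost2 R x y)).
Qed.

Lemma sum_swap3 (I J K2 Z : Type) (rI : seq I) (rJ : seq J) (rK : J -> seq K2) (rZ : J -> seq Z)
  (F : I -> J -> K2 -> Z -> R) :
  \sum_(i <- rI) \sum_(j <- rJ) \sum_(k <- rK j) \sum_(z <- rZ j) F i j k z =
  \sum_(j <- rJ) \sum_(k <- rK j) \sum_(z <- rZ j) \sum_(i <- rI) F i j k z.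
Proof.
rewrite exchange_big; apply: eq_bigr => j _; rewrite exchange_big.
by apply: eq_bigr => k _; rewrite exchange_big.
Qed.

Definition uu (T : nat) : \bar R :=
  (((T%:R)^-1)%:E *
   \sum_(1 <= t < T.+1) expect P (fun w => slot_cost c0 c U V (fun l u => N l u w) t))%E.

Lemma u_eq T : uu T = (objmu Cap Req c0 c U V (muT T))%:E.
Proof.
rewrite /uu.
under eq_bigr do rewrite (expectE P (bm_slot _)) RE_slot.
rewrite sumEFin -EFinM; congr EFin.
rewrite sum_swap3 mulr_sumr /objmu; apply: eq_bigr => l _.
rewrite [V * _]mulr_sumr [U * _]mulr_sumr -big_split mulr_sumr; apply: eq_bigr => x _.
rewrite [V * _]mulr_sumr [U * _]mulr_sumr -big_split mulr_sumr; apply: eq_bigr => y _.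
rewrite /muT /= -mulr_sumr; ring.
Qed.


Lemma mu01 T i : (0 < T)%N -> 0 <= muT T i <= 1.
Proof.
move=> hT; rewrite /muT; apply/andP; split.
  by rewrite mulr_ge0 ?invr_ge0 ?ler0n //; apply: sumr_ge0 => t _; case/andP: (pr01 i.1.1 t i.1.2 i.2).
have T0 : (T%:R : R) != 0 by rewrite pnatr_eq0 -lt0n.
apply: (le_trans (y := T%:R^-1 * T%:R)); last by rewrite mulVf.
rewrite ler_wpM2l ?invr_ge0 ?ler0n //.
apply: (le_trans (y := \sum_(1 <= t < T.+1) (1 : R))).
  by apply: ler_sum => t _; case/andP: (pr01 i.1.1 t i.1.2 i.2).
by rewrite sumr_const_nat subn1 /=.
Qed.

Lemma mu_sum1 T l : (0 < T)%N -> \sum_(x <- Ns l) \sum_(y <- Ns l) muT T (l, x, y) = 1.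
Proof.
move=> hT; have T0 : (T%:R : R) != 0 by rewrite pnatr_eq0 -lt0n.
rewrite /muT /=.
under eq_bigr do rewrite -mulr_sumr.
rewrite -mulr_sumr.
under eq_bigr do rewrite exchange_big.
rewrite exchange_big /=.
under eq_bigr do rewrite pr_sum1.
by rewrite sumr_const_nat subn1 mulVf.
Qed.

Definition pfun l t x : R := RE P (fun w => (N l t w == x)%:R).

Lemma pfun01 l t x : 0 <= pfun l t x <= 1.
Proof.
have bmf : bm (fun w => ((N l t w == x)%:R : R)).
  apply: (bm_rv (X := N l t) (g := fun a => ((a == x)%:R : R)) (k := 1)); first exact: hNm.
  by move=> w; case: (N l t w == x); rewrite ?normr1 ?normr0.
have h0 : RE P (fun _ => 0) <= pfun l t x.
  by apply: (RE_le P (bm_cst Omega _) bmf) => w; rewrite ler0n.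
have h1 : pfun l t x <= RE P (fun _ => 1).
  by apply: (RE_le P bmf (bm_cst Omega _)) => w; case: (N l t w == x); rewrite ?lexx ?ler01.
by move: h0 h1; rewrite !RE_cst => -> ->.
Qed.

Lemma collapse_seq (T : eqType) (s : seq T) (x : T) (F : T -> R) :
  uniq s -> x \in s -> \sum_(a <- s) (a == x)%:R * F a = F x.
Proof.
move=> us xs; rewrite (bigD1_seq x) //= eqxx mul1r big1 ?addr0 // => a ax.
by rewrite (negPf ax) mul0r.
Qed.

Lemma marg_row l t x : x \in Ns l -> \sum_(y <- Ns l) pr l t x y = pfun l t.-1 x.
Proof.
move=> xs; rewrite /pfun (REpair l t (fun a b => (a == x)%:R)).
under [RHS]eq_bigr do rewrite -mulr_sumr.
by rewrite (collapse_seq (fun a => \sum_(y <- Ns l) pr l t a y)) // Nsu.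
Qed.

Lemma marg_col l t x : x \in Ns l -> \sum_(y <- Ns l) pr l t y x = pfun l t x.
Proof.
move=> xs; rewrite /pfun (REpair l t (fun a b => (b == x)%:R)).
apply: eq_bigr => a _.
by rewrite (collapse_seq (fun b => pr l t a b)) // Nsu.
Qed.

Lemma telescope (f : nat -> R) T :
  \sum_(1 <= t < T.+1) f t.-1 - \sum_(1 <= t < T.+1) f t = f 0%N - f T.
Proof.
elim: T => [|T IH]; first by rewrite !big_geq // !subrr.
rewrite (big_nat_recr T.+1) // (big_nat_recr T.+1 _ f) //=.
have -> : forall a b u v : R, a + u - (b + v) = (a - b) + u - v by move=> a b u v; ring.
by rewrite IH; ring.
Qed.

Lemma mu_rc T l x : (0 < T)%N -> x \in Ns l ->
  `|rowmu Cap Req (muT T) l x - colmu Cap Req (muT T) l x| <= T%:R^-1.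
Proof.
move=> hT xs; rewrite /rowmu /colmu /muT /=.
rewrite -!mulr_sumr.
rewrite exchange_big [X in _ - _ * X]exchange_big /=.
under eq_bigr do rewrite marg_row //.
under [X in _ - _ * X]eq_bigr do rewrite marg_col //.
rewrite -mulrBr telescope normrM ger0_norm ?invr_ge0 ?ler0n //.
rewrite -[X in _ <= X]mulr1 ler_wpM2l ?invr_ge0 ?ler0n //.
have := pfun01 l 0 x; have := pfun01 l T x => /andP [a1 a2] /andP [b1 b2].
by rewrite ler_norml; apply/andP; split; lra.
Qed.


Definition Qt (t : nat) (w : Omega) : R :=
  (\sum_i queue (fun u => A u w) (fun l u => N l u w) t i)%:R.

Lemma rv_queue t : rv_meas (fun w => queue (fun u => A u w) (fun l u => N l u w) t).
Proof.
elim: t => [|t IH]; first exact: rv_cst.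
pose F (p : cfg * cfg * {ffun 'I_L -> cfg}) := qstep p.1.1 (served p.1.1 (fun l => p.2 l)) p.1.2.
have -> : (fun w => queue (fun u => A u w) (fun l u => N l u w) t.+1) =
  (fun w => F (queue (fun u => A u w) (fun l u => N l u w) t, A t w, [ffun l => N l t w])).
  apply: funext => w /=; rewrite /F /=; congr (qstep _ (served _ _) _).
  by apply: funext => l; rewrite ffunE.
apply: rv_comp; apply: rv_pair; first exact: rv_pair.
by apply: rv_ffun => l; exact: hNm.
Qed.

Lemma mQt T : measurable_fun setT (Qt T).
Proof.
apply: rv_mfun; rewrite /Qt.
exact: (rv_comp (fun q : cfg => ((\sum_i q i)%:R : R)) (rv_queue T)).
Qed.

Lemma Qt0 T w : 0 <= Qt T w.
Proof. by rewrite /Qt ler0n. Qed.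

Lemma capxN m (x : cfg) : capx R m x = (capN m x)%:R.
Proof. by []. Qed.

Lemma bm_capx l t m : bm (fun w => capx R m (N l t w)).
Proof.
have := bm_pairN l t.+1 (fun a b => capx R m a) => /=.
by [].
Qed.

Lemma bmA t i : bm (fun w => ((A t w i)%:R : R)).
Proof.
apply: (bm_rv (X := A t) (g := fun a : cfg => ((a i)%:R : R)) (k := Amax%:R)); first exact: hAm.
by move=> w; rewrite ger0_norm ?ler0n // ler_nat hAb.
Qed.

Lemma REA t i : RE P (fun w => ((A t w i)%:R : R)) = lam i.
Proof. by rewrite /RE hAE. Qed.

Lemma RE_aw T m : RE P (fun w => ((\sum_(t < T) Wk m (A t w))%:R : R)) = T%:R * wk lam m.
Proof.
have -> : (fun w => ((\sum_(t < T) Wk m (A t w))%:R : R)) =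
   (fun w => \sum_(t < T) \sum_(s < S) (s.+1)%:R * ((A t w (m, s))%:R : R)).
  apply: funext => w; rewrite natr_sum; apply: eq_bigr => t _.
  by rewrite /Wk natr_sum; apply: eq_bigr => s _; rewrite natrM.
rewrite RE_sum; last first.
  by move=> t; apply: bm_sum => s; apply: bm_scale; exact: bmA.
have e (t : 'I_T) : RE P (fun w => \sum_(s < S) (s.+1)%:R * ((A t w (m, s))%:R : R)) = wk lam m.
  rewrite RE_sum; last by move=> s; apply: bm_scale; exact: bmA.
  by apply: eq_bigr => s _; rewrite RE_scale ?REA //; exact: bmA.
rewrite (eq_bigr _ (fun t _ => e t)).
by rewrite sumr_const card_ord /wk mulr_natl.
Qed.

Lemma bm_aw T m : bm (fun w => ((\sum_(t < T) Wk m (A t w))%:R : R)).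
Proof.
have -> : (fun w => ((\sum_(t < T) Wk m (A t w))%:R : R)) =
   (fun w => \sum_(t < T) \sum_(s < S) (s.+1)%:R * ((A t w (m, s))%:R : R)).
  apply: funext => w; rewrite natr_sum; apply: eq_bigr => t _.
  by rewrite /Wk natr_sum; apply: eq_bigr => s _; rewrite natrM.
by apply: bm_sum => t; apply: bm_sum => s; apply: bm_scale; exact: bmA.
Qed.

Definition cp T m (w : Omega) : R := \sum_(t < T) \sum_(l < L) capx R m (N l t w).

Lemma bm_cp T m : bm (cp T m).
Proof. by apply: bm_sum => t; apply: bm_sum => l; exact: bm_capx. Qed.

Lemma pointwise_bound T m w :
  ((\sum_(t < T) Wk m (A t w))%:R : R) <= cp T m w + S%:R * Qt T w.
Proof.
have h1 := work_bound (fun u => A u w) (fun l u => N l u w) m T.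
have h2 := Wk_le m (queue (fun u => A u w) (fun l u => N l u w) T).
have h3 : (\sum_(t < T) Wk m (A t w) <=
    S * (\sum_i queue (fun u => A u w) (fun l u => N l u w) T i) +
    \sum_(t < T) \sum_(l < L) capN m (N l t w))%N.
  move: h1 h2; move: (\sum_(t < T) Wk m (A t w)) => a1.
  move: (\sum_(t < T) \sum_(l < L) capN m (N l t w)) => a2.
  move: (\sum_i queue (fun u => A u w) (fun l u => N l u w) T i) => a3.
  move=> h1 h2; apply: (leq_trans h1); rewrite leq_add2r //.
apply: (le_trans (y := ((S * (\sum_i queue (fun u => A u w) (fun l u => N l u w) T i) +
    \sum_(t < T) \sum_(l < L) capN m (N l t w))%N)%:R)); first by rewrite ler_nat.
rewrite natrD natrM addrC /cp /Qt; apply: lerD; last by [].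
rewrite natr_sum; apply: ler_sum => t _; rewrite natr_sum.
by apply: ler_sum => l _.
Qed.

Lemma RE_cp T m : RE P (cp T m) = \sum_(t < T) \sum_(l < L) RE P (fun w => capx R m (N l t w)).
Proof.
rewrite /cp RE_sum; last by move=> t; apply: bm_sum => l; exact: bm_capx.
by apply: eq_bigr => t _; rewrite RE_sum //; move=> l; exact: bm_capx.
Qed.


Lemma capmu_eq T m :
  capmu Cap Req (muT T) m = T%:R^-1 * \sum_(t < T) \sum_(l < L) RE P (fun w => capx R m (N l t w)).
Proof.
have e (t : nat) : \sum_(l < L) RE P (fun w => capx R m (N l t.+1.-1 w)) =
    \sum_(l < L) \sum_(x <- Ns l) \sum_(y <- Ns l) capx R m x * pr l t.+1 x y.
  by apply: eq_bigr => l _; rewrite (REpair l t.+1 (fun a b => capx R m a)).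
have -> : \sum_(t < T) \sum_(l < L) RE P (fun w => capx R m (N l t w)) =
    \sum_(1 <= t < T.+1) \sum_(l < L) \sum_(x <- Ns l) \sum_(y <- Ns l) capx R m x * pr l t x y.
  rewrite big_add1 /= -(big_mkord xpredT (fun t => \sum_(l < L) RE P (fun w => capx R m (N l t w)))).
  by apply: eq_bigr => t _; rewrite -e.
rewrite sum_swap3 mulr_sumr /capmu; apply: eq_bigr => l _.
rewrite mulr_sumr; apply: eq_bigr => x _.
rewrite mulr_sumr; apply: eq_bigr => y _.
rewrite /muT /= -mulr_sumr; ring.
Qed.

Lemma cap_bound :
  (exists q : R,
     (fun t => expect P (fun w =>
        (\sum_(i : 'I_M * 'I_S) queue (fun u => A u w) (fun l u => N l u w) t i)%:R))
     @ \oo --> q%:E) ->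
  exists D : R, 0 <= D /\ exists T0, forall T, (T0 <= T)%N -> (0 < T)%N ->
    forall m, wk lam m <= capmu Cap Req (muT T) m + D * T%:R^-1.
Proof.
case=> q hq.
have nb : ereal_nbhs q%:E (fun u => (u < (`|q| + 1)%:E)%E).
  apply: open_ereal_lt'; rewrite lte_fin; have := ler_norm q; lra.
have [T0 _ HT0] := hq _ nb.
exists (S%:R * (`|q| + 1)); split; first by rewrite mulr_ge0 ?ler0n // addr_ge0.
exists T0 => T hT0 hT m.
have EQ : (expect P (Qt T) <= (`|q| + 1)%:E)%E by apply/ltW; exact: (HT0 T hT0).
have key : T%:R * wk lam m <= RE P (cp T m) + S%:R * (`|q| + 1).
  rewrite -RE_aw -lee_fin -(expectE P (bm_aw T m)).
  apply: (le_trans (y := expect P (fun w => cp T m w + S%:R * Qt T w))).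
    apply: ge0_le_integral => //.
    - by apply/measurable_EFinP; case: (bm_aw T m).
    - apply/measurable_EFinP; apply: measurable_funD; first by case: (bm_cp T m).
      by apply: measurable_funM; [exact: measurable_cst|exact: mQt].
    - by move=> w _; rewrite lee_fin pointwise_bound.
  have cp0 w : 0 <= cp T m w.
    by apply: sumr_ge0 => t _; apply: sumr_ge0 => l _; rewrite /capx ler0n.
  rewrite /expect.
  under eq_integral do rewrite EFinD.
  rewrite ge0_integralD //; last first.
  - by apply/measurable_EFinP; apply: measurable_funM; [exact: measurable_cst|exact: mQt].
  - by move=> w _; rewrite lee_fin mulr_ge0 ?ler0n ?Qt0.
  - by apply/measurable_EFinP; case: (bm_cp T m).
  - by move=> w _; rewrite lee_fin cp0.
  under [X in (_ + X <= _)%E]eq_integral do rewrite EFinM.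
  rewrite ge0_integralZl //; last first.
  - by move=> w _; rewrite lee_fin Qt0.
  - by apply/measurable_EFinP; exact: mQt.
  rewrite -/(expect P (cp T m)) (expectE P (bm_cp T m)) EFinD EFinM.
  by apply: leeD2l; apply: lee_wpmul2l => //; rewrite lee_fin ler0n.
have T0' : (T%:R : R) != 0 by rewrite pnatr_eq0 -lt0n.
have Tp : (0 : R) < T%:R by rewrite ltr0n.
rewrite capmu_eq -RE_cp.
rewrite -[wk lam m](mulKf T0') (mulrC _ (T%:R^-1)) -mulrDr.
by rewrite ler_wpM2l ?invr_ge0 ?ler0n.
Qed.


Hypotheses (hc0 : 0 <= c0) (hc : forall m, 0 <= c m) (hU : 0 <= U) (hV : 0 <= V).

Lemma Copt_le (v : R) laml pi Pm :
  opt_feasible Cap Req lam laml pi Pm -> opt_objective Cap Req c0 c U V pi Pm <= v ->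
  Copt Cap Req c0 c U V lam <= v.
Proof.
move=> hf hv; apply: le_trans hv; rewrite /Copt; apply: ge_inf.
  exists 0 => w [laml' [pi' [P' [hf' ->]]]].
  exact: (objective_ge0 hc0 hc hU hV hf').
by exists laml, pi, Pm.
Qed.


Definition eps (n : nat) : R := (n.+1%:R)^-1.

Lemma eps_ge0 n : 0 <= eps n.
Proof. by rewrite /eps invr_ge0 ler0n. Qed.

Lemma eps_mono n : eps n.+1 <= eps n.
Proof. by rewrite /eps lef_pV2 ?posrE ?ltr0n ?ler_nat. Qed.

Lemma invT_le n T : (n.+1 <= T)%N -> (T%:R : R)^-1 <= eps n.
Proof.
move=> h; rewrite /eps lef_pV2 ?posrE ?ltr0n ?ler_nat //.
by apply: leq_trans h.
Qed.

Definition Hs (r D : R) (n : nat) : set (prod_topology (fun _ : 'I_L * cfg * cfg => Topo.RT2 R)) :=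
  [set mu | forall i : 'I_L * cfg * cfg, - (mu i : R) <= 0] `&`
  [set mu | forall i : 'I_L * cfg * cfg, (mu i : R) <= 1] `&`
  [set mu | forall l : 'I_L, \sum_(x <- Ns l) \sum_(y <- Ns l) (mu (l, x, y) : R) <= 1] `&`
  [set mu | forall l : 'I_L, - \sum_(x <- Ns l) \sum_(y <- Ns l) (mu (l, x, y) : R) <= -1] `&`
  [set mu | forall p : 'I_L * cfg, (p.2 \in Ns p.1)%:R * (rowmu Cap Req mu p.1 p.2 - colmu Cap Req mu p.1 p.2) <= eps n] `&`
  [set mu | forall p : 'I_L * cfg, (p.2 \in Ns p.1)%:R * (colmu Cap Req mu p.1 p.2 - rowmu Cap Req mu p.1 p.2) <= eps n] `&`
  [set mu | forall _ : unit, objmu Cap Req c0 c U V mu <= r] `&`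
  [set mu | forall m : 'I_M, wk lam m - capmu Cap Req mu m <= D * eps n].

Lemma Hs_closed r D n : closed (Hs r D n).
Proof.
rewrite /Hs; repeat apply: closedI; apply: Topo.closed_forall_le.
- by move=> i; apply: Topo.cont_opp; exact: Topo.cont_proj.
- by move=> i; exact: Topo.cont_proj.
- move=> l; apply: Topo.cont_sum => x; apply: Topo.cont_sum => y; exact: Topo.cont_proj.
- move=> l; apply: Topo.cont_opp; apply: Topo.cont_sum => x; apply: Topo.cont_sum => y; exact: Topo.cont_proj.
- move=> p; apply: Topo.cont_scale; rewrite /rowmu /colmu.
  by apply: Topo.cont_sub; apply: Topo.cont_sum => y; exact: Topo.cont_proj.
- move=> p; apply: Topo.cont_scale; rewrite /rowmu /colmu.
  by apply: Topo.cont_sub; apply: Topo.cont_sum => y; exact: Topo.cont_proj.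
- move=> _; rewrite /objmu; apply: Topo.cont_sum => l; apply: Topo.cont_add; apply: Topo.cont_scale;
  apply: Topo.cont_sum => x; apply: Topo.cont_sum => y; apply: Topo.cont_scaler; exact: Topo.cont_proj.
- move=> m; apply: Topo.cont_sub; first exact: Topo.cont_cst.
  rewrite /capmu; apply: Topo.cont_sum => l; apply: Topo.cont_sum => x; apply: Topo.cont_sum => y.
  apply: Topo.cont_scaler; exact: Topo.cont_proj.
Qed.


Lemma final_ineq :
  (exists q : R,
     (fun t => expect P (fun w =>
        (\sum_(i : 'I_M * 'I_S) queue (fun u => A u w) (fun l u => N l u w) t i)%:R))
     @ \oo --> q%:E) ->
  ((Copt Cap Req c0 c U V lam)%:E <= limn_einf uu)%E.
Proof.
move=> hstab.
have [D [D0 [T0 HT]]] := cap_bound hstab.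
rewrite leNgt; apply/negP => hlt.
set Cop := Copt Cap Req c0 c U V lam in hlt *.
have [r [hr1 hr2]] : exists r : R, (limn_einf uu < r%:E)%E /\ r < Cop.
  move: hlt; case: (limn_einf uu) => [l| |] hlt.
  - exists ((l + Cop) / 2); rewrite !lte_fin in hlt *; split; lra.
  - by [].
  - by exists (Cop - 1); split; [exact: ltNyr| lra].
have fr := frequent hr1.
have Hne : forall n, Hs r D n !=set0.
  move=> n; have [T [hT hu]] := fr (maxn n.+1 T0).
  have hT1 : (n.+1 <= T)%N by apply: leq_trans hT; exact: leq_maxl.
  have hT2 : (T0 <= T)%N by apply: leq_trans hT; exact: leq_maxr.
  have hT3 : (0 < T)%N by apply: leq_trans hT1.
  exists (muT T); rewrite /Hs.
  have iT := invT_le hT1.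
  split; [split; [split; [split; [split; [split; [split|]|]|]|]|]|].
  - by move=> i; rewrite oppr_le0; case/andP: (mu01 i hT3).
  - by move=> i; case/andP: (mu01 i hT3).
  - by move=> l; rewrite mu_sum1.
  - by move=> l; rewrite mu_sum1.
  - move=> [l x] /=; case: (boolP (x \in Ns l)) => xs; last by rewrite mul0r eps_ge0.
    rewrite mul1r; apply: le_trans iT; apply: le_trans (mu_rc hT3 xs).
    exact: ler_norm.
  - move=> [l x] /=; case: (boolP (x \in Ns l)) => xs; last by rewrite mul0r eps_ge0.
    rewrite mul1r; apply: le_trans iT; apply: le_trans (mu_rc hT3 xs).
    by rewrite distrC; exact: ler_norm.
  - by move=> _; rewrite -lee_fin -u_eq; exact: ltW.
  - move=> m; have := HT T hT2 hT3 m.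
    have : D * T%:R^-1 <= D * eps n by rewrite ler_wpM2l.
    lra.
have Hb : forall n f, Hs r D n f -> forall i, 0 <= f i <= 1.
  move=> n f [[[[[[[h1 h2] _] _] _] _] _] _] i.
  by have := h1 i; have := h2 i; rewrite oppr_le0 => -> ->.
have Hd : forall n, Hs r D n.+1 `<=` Hs r D n.
  move=> n f [[[[[[[h1 h2] h3] h4] h5] h6] h7] h8].
  have en := eps_mono n.
  split; [split; [split; [split; [split; [split; [split|]|]|]|]|]|] => //.
  - by move=> p; apply: le_trans (h5 p) en.
  - by move=> p; apply: le_trans (h6 p) en.
  - move=> m; apply: le_trans (h8 m) _; by rewrite ler_wpM2l.
have [mus hmus] := Topo.nested_limit (@Hs_closed r D) Hb Hd Hne.
have mu0 : forall i, 0 <= (mus i : R).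
  by move=> i; have [[[[[[[h1 _] _] _] _] _] _] _] := hmus 0%N; rewrite -oppr_le0; exact: h1.
have mu1 : forall l, \sum_(x <- Ns l) \sum_(y <- Ns l) (mus (l, x, y) : R) = 1.
  move=> l; have [[[[[[[_ _] h3] h4] _] _] _] _] := hmus 0%N.
  by have := h3 l; have := h4 l; rewrite lerN2 => a b; apply/eqP; rewrite eq_le a b.
have murc : forall l x, x \in Ns l -> rowmu Cap Req mus l x = colmu Cap Req mus l x.
  move=> l x xs; apply/eqP; rewrite -subr_eq0 eq_le; apply/andP; split.
    apply: (small_le (D := 1)) => // n.
    have [[[[[[[_ _] _] _] h5] _] _] _] := hmus n.
    by have := h5 (l, x); rewrite /= xs mul1r mul1r.
  rewrite -opprB oppr_ge0; apply: (small_le (D := 1)) => // n.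
  have [[[[[[[_ _] _] _] _] h6] _] _] := hmus n.
  by have := h6 (l, x); rewrite /= xs !mul1r.
have mucap : forall m, wk lam m <= capmu Cap Req mus m.
  move=> m; rewrite -subr_le0; apply: (small_le D0) => n.
  by have [[[[[[[_ _] _] _] _] _] _] h8] := hmus n; exact: h8.
have hobj : objmu Cap Req c0 c U V mus <= r.
  by have [[[[[[[_ _] _] _] _] _] h7] _] := hmus 0%N; exact: h7.
have feas := feasible_mu (Nsu) lam0 mu0 mu1 murc mucap.
have hob := obj_mu c0 c U V (Nsu) mu0 murc.
have := Copt_le feas (v := r); rewrite hob => /(_ hobj).
rewrite -/Cop; lra.
Qed.

End Main.

Unset Implicit Arguments.

Theorem lemma1 (L M K S : nat) (Cap : 'I_L -> 'I_K -> nat) (Req : 'I_M -> 'I_K -> nat)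
  (R : realType) (c0 : R) (c : 'I_M -> R) (U V : R)
  (d : measure_display) (Omega : measurableType d) (P : probability Omega R)
  (Amax : nat) (lam : 'I_M * 'I_S -> R)
  (A : nat -> Omega -> cfg M S)
  (N : 'I_L -> nat -> Omega -> cfg M S) :
  (forall m, exists k, (0 < Req m k)%N) ->
  0 <= c0 -> (forall m, 0 <= c m) -> 0 <= U -> 0 <= V ->
  in_capacity_region Cap Req lam ->
  (* arrivals: i.i.d. across slots, bounded, with mean lam and P(A = 0) > 0 *)
  (forall t, rv_meas (A t)) ->
  iid_seq P A ->
  (forall t w i, (A t w i <= Amax)%N) ->
  (forall t i, expect P (fun w => (A t w i)%:R) = (lam i)%:E) ->
  (forall t i, (0 < P [set w | A t w i = 0%N])%E) ->
  (* the policy: any (measurable) choice of configurations N^l(t) in N^l *)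
  (forall l t, rv_meas (N l t)) ->
  (forall l t w, feasibleN Cap Req l (N l t w)) ->
  (* stability: lim_t sum_{m,s} E[Q_{m,s}(t)] exists and is finite *)
  (exists q : R,
     (fun t => expect P (fun w =>
        (\sum_(i : 'I_M * 'I_S) queue (fun u => A u w) (fun l u => N l u w) t i)%:R))
     @ \oo --> q%:E) ->
  ((Copt Cap Req c0 c U V lam)%:E
   <= limn_einf (fun T : nat =>
        ((T%:R)^-1)%:E *
        \sum_(1 <= t < T.+1) expect P (fun w => slot_cost c0 c U V (fun l u => N l u w) t)))%E.
Proof.
move=> hReq hc0 hc hU hV _ hAm _ hAb hAE _ hNm hNf hstab.
exact: (final_ineq hReq hAm hAb hAE hNm hNf hc0 hc hU hV hstab).
Qed.
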